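(* Let $a,d$ be positive integers with $d$ not a perfect square, $\alpha=a+\sqrt d$, $N_\alpha=a^2-d$, and suppose $-N_\alpha$ is an odd perfect square. Let $t,u$ be positive integers with $1\le u\le8$ such that $\varepsilon=(t+u\sqrt d)/2$ is a unit of the ring of integers of $\mathbb{Q}(\sqrt d)$, define $x_k+y_k\sqrt d=\alpha\varepsilon^{2k}$, and suppose $y_{-1}>1$. Suppose that for some $\sigma\in\{1,-1\}$, $y_\sigma$ is the square of an integer and \[ y_\sigma<\max\left(1,\ \frac{76|N_\alpha|^{3/2}}{\sqrt d\,(|g|\,\mathcal N_{d',4})^2}\right), \] where $g,\mathcal N_{d',4}$ are computed from $x_\sigma$ as below. Then $u=2$, $t^2-du^2=-4$ and $\gcd(a^2,d)=1$.
   Context: $\operatorname{core}(n)$ is the unique squarefree integer with $n/\operatorname{core}(n)$ a perfect square; $v_2$ is the $2$-adic valuation. Put $t'=\operatorname{core}(N_\alpha)$, $u_1=2x_\sigma$, $u_2=2\sqrt{N_\alpha/\operatorname{core}(N_\alpha)}$; $g_1=\gcd(u_1,u_2)$, $g_2=\gcd(u_1/g_1,t')$; $g_3=1$ if $t'\equiv1\pmod4$ and $(u_1-u_2)/g_1$ even, $g_3=2$ if $t'\equiv3\pmod4$ and $(u_1-u_2)/g_1$ even, $g_3=4$ otherwise; $g=g_1\sqrt{g_2/g_3}$; $d'=u_2^2t'/g^2$; $\mathcal N_{d',4}=2^{\min(v_2(d')/2,\,3)}$. *)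

(* Defs.v *)
From Stdlib Require Import Bool ZArith Reals Lra ClassicalEpsilon.
Open Scope Z_scope.

Definition squarefree (c : Z) : Prop :=
  c <> 0 /\ forall p : Z, (p * p | c) -> p = 1 \/ p = -1.

Definition is_core (n c : Z) : Prop :=
  squarefree c /\ exists m : Z, n = c * (m * m).

Definition core (n : Z) : Z := epsilon (inhabits 0) (is_core n).

Definition v2 (n : Z) : nat :=
  epsilon (inhabits 0%nat)
    (fun k : nat => (2 ^ Z.of_nat k | n) /\ ~ (2 ^ Z.of_nat (S k) | n)).

Definition Nalpha (a d : Z) : Z := a ^ 2 - d.

Definition tpr (a d : Z) : Z := core (Nalpha a d).

(* u2 = 2 sqrt(N_alpha / core(N_alpha)) (an integer: the quotient is a square) *)
Definition u2 (a d : Z) : Z := 2 * Z.sqrt (Nalpha a d / tpr a d).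

(* In all the following, u1 = 2 x_sigma is passed as the integer argument u1 *)
Definition g1 (a d u1 : Z) : Z := Z.gcd u1 (u2 a d).
Definition g2 (a d u1 : Z) : Z := Z.gcd (u1 / g1 a d u1) (tpr a d).
Definition g3 (a d u1 : Z) : Z :=
  let ev := Z.even ((u1 - u2 a d) / g1 a d u1) in
  if andb (tpr a d mod 4 =? 1) ev then 1
  else if andb (tpr a d mod 4 =? 3) ev then 2
  else 4.

Definition gR (a d u1 : Z) : R :=
  (IZR (g1 a d u1) * sqrt (IZR (g2 a d u1) / IZR (g3 a d u1)))%R.

(* d' = u2^2 t' / g^2 = u2^2 t' g3 / (g1^2 g2), an integer (g1 | u2, g2 | t') *)
Definition dpr (a d u1 : Z) : Z :=
  (u2 a d ^ 2 * tpr a d * g3 a d u1) / (g1 a d u1 ^ 2 * g2 a d u1).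

Definition Ncal (a d u1 : Z) : R :=
  Rpower 2 (Rmin (INR (v2 (dpr a d u1)) / 2) 3).

(* Main.v *)
Require Import Defs.
From Stdlib Require Import ZArith Reals Lra Lia Psatz Znumtheory ClassicalEpsilon.
Open Scope Z_scope.


Lemma sq4 x : exists j, x*x = 4*j \/ x*x = 8*j+1.
Proof.
  destruct (Z.Even_or_Odd x) as [[k Hk]|[k Hk]]; subst.
  - exists (k*k); left; ring.
  - destruct (Z.Even_or_Odd k) as [[l Hl]|[l Hl]]; subst.
    + exists (2*l*l+l); right; ring.
    + exists (2*l*l+3*l+1); right; ring.
Qed.

Lemma sq3 x : exists j, x*x = 3*j \/ x*x = 3*j+1.
Proof.
  pose proof (Z.div_mod x 3 ltac:(lia)) as H.
  pose proof (Z.mod_pos_bound x 3 ltac:(lia)) as Hb.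
  set (q := x / 3) in *. set (r := x mod 3) in *.
  assert (r = 0 \/ r = 1 \/ r = 2) as [E|[E|E]] by lia; rewrite E in H; rewrite H.
  - exists (3*q*q); left; ring.
  - exists (3*q*q+2*q); right; ring.
  - exists (3*q*q+4*q+1); right; ring.
Qed.

Lemma sq_rat d A B : B <> 0 -> d*(B*B) = A*A -> exists r, d = r*r.
Proof.
  intros HB H.
  set (g := Z.gcd A B).
  assert (Hg : 0 < g).
  { pose proof (Z.gcd_nonneg A B). assert (g <> 0); [|lia].
    intro E. apply Z.gcd_eq_0 in E. lia. }
  destruct (Z.gcd_divide_l A B) as [A' HA].
  destruct (Z.gcd_divide_r A B) as [B' HB'].
  fold g in HA, HB'.
  assert (Hc : Z.gcd A' B' = 1).
  { assert (Z.gcd A' B' * g = g).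
    { rewrite <- Z.gcd_mul_mono_r_nonneg by lia. rewrite <- HA, <- HB'. reflexivity. }
    nia. }
  assert (H2 : d*(B'*B') = A'*A').
  { apply (Z.mul_reg_r _ _ (g*g)). nia. nia. }
  assert (Hd : (B' | A' * A')) by (exists (d*B'); lia).
  apply Z.gauss in Hd; [|rewrite Z.gcd_comm; exact Hc].
  assert (H1 : (B' | 1)).
  { rewrite <- Hc. apply Z.gcd_greatest; [exact Hd| apply Z.divide_refl]. }
  apply Z.divide_1_r in H1. exists A'. destruct H1; subst B'; lia.
Qed.


Lemma core_val N s : s <> 0 -> N = -(s*s) -> core N = -1.
Proof.
  intros Hs HN. unfold core.
  assert (Hex : exists c, is_core N c).
  { exists (-1). split.
    - split; [lia|]. intros p Hp.
      assert (Hp1 : (p*p | 1)) by (apply Z.divide_opp_r in Hp; exact Hp).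
      apply Z.divide_1_r in Hp1. nia.
    - exists s; lia. }
  pose proof (epsilon_spec (inhabits 0) (is_core N) Hex) as [[Hc0 Hsq] [m Hm]].
  set (c := epsilon (inhabits 0) (is_core N)) in *.
  assert (Hmm : 0 <= m*m) by nia.
  assert (Hneg : c < 0) by nia.
  assert (Hm0 : m <> 0) by (intro; subst; lia).
  destruct (sq_rat (-c) s m Hm0 ltac:(lia)) as [q Hq].
  destruct (Hsq q) as [E|E].
  - exists (-1). lia.
  - subst q. lia.
  - subst q. lia.
Qed.

Lemma irr_zero (d A B : Z) : (forall r, d <> r*r) -> 0 <= d ->
  IZR A = (IZR B * sqrt (IZR d))%R -> A = 0 /\ B = 0.
Proof.
  intros Hns Hd H.
  assert (Hr : (sqrt (IZR d) * sqrt (IZR d) = IZR d)%R) by (apply sqrt_sqrt; apply IZR_le; lia).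
  assert (H2 : IZR (A*A) = IZR (d*(B*B))).
  { rewrite !mult_IZR, H. set (r := sqrt (IZR d)) in *. rewrite <- Hr. ring. }
  apply eq_IZR in H2.
  destruct (Z.eq_dec B 0) as [HB|HB].
  - subst. rewrite Rmult_0_l in H. apply eq_IZR in H. auto.
  - destruct (sq_rat d A B HB (eq_sym H2)) as [r Hr']. exfalso; exact (Hns r Hr').
Qed.


Lemma oddsq x : Z.odd x = true -> exists j, x*x = 8*j+1.
Proof.
  intro H. destruct (Z.Even_or_Odd x) as [[k Hk]|[k Hk]]; subst.
  - rewrite Z.odd_even in H. discriminate.
  - destruct (Z.Even_or_Odd k) as [[l Hl]|[l Hl]]; subst.
    + exists (2*l*l+l); ring.
    + exists (2*l*l+3*l+1); ring.
Qed.

Lemma int_cases a s d t u e sg m :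
 0<a -> 0<s -> Z.odd s = true -> d = a*a+s*s -> 0<t -> 1<=u<=8 ->
 (e=1\/e=-1) -> (sg=1\/sg=-1) ->
 t*t - d*(u*u) = 4*e -> 4*(m*m) = t*t + d*(u*u) + 2*sg*a*t*u ->
 exists w, t = 2*w /\ ((u = 2 /\ e = -1) \/ (u = 8 /\ e = 1 /\ w*w = 16*d+1)).
Proof.
  intros Ha Hs Hso Hd Ht Hu He Hsg E Y.
  destruct (oddsq s Hso) as [j2 Hs2].
  destruct (sq4 m) as [jm Hm].
  destruct (sq4 t) as [jt Htt].
  destruct (Z.Even_or_Odd a) as [[a1 Ha1]|[a1 Ha1]].
  -
    assert (Hd' : d = 4*(a1*a1+2*j2)+1) by (rewrite Hd, Ha1; lia).
    destruct (Z.Even_or_Odd u) as [[v Hv]|[v Hv]].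
    + subst u.
      destruct (Z.Even_or_Odd t) as [[w Hw]|[k Hk]]; [|subst t; exfalso; timeout 10 nia].
      subst t. exists w. split; [reflexivity|].
      assert (E' : w*w - d*(v*v) = e) by (timeout 10 nia).
      assert (Y' : m*m = w*w + d*(v*v) + 2*sg*a*w*v) by (timeout 10 nia).
      destruct (sq4 w) as [jw Hw].
      destruct (sq3 w) as [kw Hw3].
      assert (v=1\/v=2\/v=3\/v=4) as [-> | [-> | [-> | ->]]] by lia;
      destruct He as [-> | ->]; try (exfalso; lia); try (left; lia); try (right; lia).
    + exfalso. subst u a.
      assert (HD : d*((2*v+1)*(2*v+1)) = 2*(m*m - e - sg*a1*t*(2*v+1))) by (timeout 10 nia).
      destruct (oddsq (2*v+1) (Z.odd_odd v)) as [ju Hu2].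
      assert (HDu : d*((2*v+1)*(2*v+1)) = 2*(16*(a1*a1+2*j2)*ju + 2*(a1*a1+2*j2) + 4*ju) + 1)
        by (rewrite Hu2, Hd'; ring).
      lia.
  -
    assert (Hao : Z.odd a = true) by (rewrite Ha1; apply Z.odd_odd).
    destruct (oddsq a Hao) as [j1 Ha2].
    assert (Hd' : d = 8*(j1+j2)+2) by lia.
    destruct (Z.Even_or_Odd u) as [[v Hv]|[v Hv]].
    + subst u.
      destruct (Z.Even_or_Odd t) as [[w Hw]|[k Hk]]; [|subst t; exfalso; timeout 10 nia].
      subst t. exists w. split; [reflexivity|].
      assert (E' : w*w - d*(v*v) = e) by (timeout 10 nia).
      assert (Y' : m*m = w*w + d*(v*v) + 2*sg*a*w*v) by (timeout 10 nia).
      destruct (sq4 w) as [jw Hw].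
      destruct (sq3 w) as [kw Hw3].
      assert (v=1\/v=2\/v=3\/v=4) as [-> | [-> | [-> | ->]]] by lia;
      destruct He as [-> | ->]; try (exfalso; lia); try (left; lia); try (right; lia).
      exfalso.
      destruct (Z.Even_or_Odd w) as [[w1 Hw1]|[w1 Hw1]]; subst w; [lia|].
      subst a.
      destruct Hsg as [-> | ->]; timeout 10 nia.
    + exfalso. subst u.
      destruct (oddsq (2*v+1) (Z.odd_odd v)) as [ju Hu2].
      assert (HDu : d*((2*v+1)*(2*v+1)) = 8*(8*(j1+j2)*ju + (j1+j2) + 2*ju) + 2)
        by (rewrite Hu2, Hd'; ring).
      lia.
Qed.


Lemma extract (a d t u e sg X Y : Z) : (forall r, d <> r*r) -> 0 < d ->
  t*t - d*(u*u) = 4*e -> (e = 1 \/ e = -1) -> (sg = 1 \/ sg = -1) ->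
  ((IZR X + IZR Y * sqrt (IZR d)) / 2
     = (IZR a + sqrt (IZR d)) *
       powerRZ ((IZR t + IZR u * sqrt (IZR d)) / 2) (2 * sg))%R ->
  2*X = a*(t*t+d*(u*u)) + 2*sg*d*t*u /\ 2*Y = t*t+d*(u*u)+2*sg*a*t*u.
Proof.
  intros Hns Hd E He Hsg H.
  assert (Hr : (sqrt (IZR d) * sqrt (IZR d) = IZR d)%R) by (apply sqrt_sqrt; apply IZR_le; lia).
  set (r := sqrt (IZR d)) in *.
  set (q := ((IZR t + IZR u * r) / 2)%R) in *.
  set (q' := ((IZR t - IZR u * r) / 2)%R).
  assert (Hqq : (q * q' = IZR e)%R).
  { unfold q, q'. apply (f_equal IZR) in E. rewrite minus_IZR, !mult_IZR in E.
    rewrite <- Hr in E. lra. }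
  assert (Hpow : (powerRZ q (2*sg) = if Z.eqb sg 1 then q*q else q'*q')%R).
  { destruct Hsg as [-> | ->]; simpl.
    - ring.
    - assert (He2 : (IZR e * IZR e = 1)%R) by (destruct He as [-> | ->]; lra).
      assert (Hq0 : (q*q <> 0)%R).
      { intro Z0. assert (Hx : ((q*q)*(q'*q') = 0)%R) by (rewrite Z0; ring).
        replace ((q*q)*(q'*q'))%R with ((q*q')*(q*q'))%R in Hx by ring.
        rewrite Hqq in Hx. lra. }
      symmetry. apply Rmult_inv_r_uniq; [rewrite Rmult_1_r; exact Hq0|].
      replace (q * (q * 1) * (q' * q'))%R with ((q*q')*(q*q'))%R by ring.
      rewrite Hqq. exact He2. }
  rewrite Hpow in H.
  set (A := 2*X - a*(t*t+d*(u*u)) - 2*sg*d*t*u).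
  set (B := t*t+d*(u*u)+2*sg*a*t*u - 2*Y).
  assert (HAB : IZR A = (IZR B * r)%R).
  { unfold A, B. repeat rewrite ?minus_IZR, ?plus_IZR, ?mult_IZR.
    rewrite <- Hr.
    destruct Hsg as [-> | ->]; simpl in H; unfold q, q' in H; simpl.
    all: lra. }
  destruct (irr_zero d A B Hns ltac:(lia) HAB). unfold A, B in *. lia.
Qed.


Lemma v2_ge n k : (2 ^ Z.of_nat k | n) ->
  (exists j : nat, (2 ^ Z.of_nat j | n) /\ ~ (2 ^ Z.of_nat (S j) | n)) -> (k <= v2 n)%nat.
Proof.
  intros Hk Hex.
  pose proof (epsilon_spec (inhabits 0%nat) _ Hex) as [_ Hn].
  change (epsilon (inhabits 0%nat)
           (fun j : nat => (2 ^ Z.of_nat j | n) /\ ~ (2 ^ Z.of_nat (S j) | n))) with (v2 n) in Hn.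
  destruct (le_lt_dec k (v2 n)) as [|Hlt]; auto.
  exfalso; apply Hn. apply Z.divide_trans with (2 ^ Z.of_nat k); auto.
  exists (2 ^ (Z.of_nat k - Z.of_nat (S (v2 n)))).
  rewrite <- Z.pow_add_r by lia. f_equal; lia.
Qed.

Lemma Ncal_sq (a d u1 : Z) (k : nat) : (k <= v2 (dpr a d u1))%nat ->
  (Rpower 2 (Rmin (INR k / 2) 3) ^ 2 <= Ncal a d u1 ^ 2)%R.
Proof.
  intros Hk. unfold Ncal.
  assert (forall z, Rpower 2 z ^ 2 = Rpower 2 (z + z))%R as Hp.
  { intro z. rewrite Rpower_plus. ring. }
  rewrite !Hp. apply Rle_Rpower; [lra|].
  apply le_INR in Hk.
  unfold Rmin; repeat destruct Rle_dec; lra.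
Qed.

Lemma Rp2_1 : (Rpower 2 (Rmin (INR 1 / 2) 3) ^ 2 = 2)%R.
Proof.
  replace (Rmin (INR 1 / 2) 3) with (/2)%R.
  - rewrite Rpower_sqrt by lra. simpl. rewrite Rmult_1_r. apply sqrt_sqrt; lra.
  - simpl. unfold Rmin; destruct Rle_dec; lra.
Qed.

Lemma Rp2_2 : (Rpower 2 (Rmin (INR 2 / 2) 3) ^ 2 = 4)%R.
Proof.
  replace (Rmin (INR 2 / 2) 3) with 1%R.
  - rewrite Rpower_1 by lra. lra.
  - simpl. unfold Rmin; destruct Rle_dec; lra.
Qed.

Lemma denom_bound (a d s x : Z) : 0 < s -> Z.odd s = true -> Nalpha a d = -(s*s) ->
  (4 * IZR (Z.gcd x s) ^ 2 <= (Rabs (gR a d (2*x)) * Ncal a d (2*x)) ^ 2)%R.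
Proof.
  intros Hs Hso HN.
  assert (Htpr : tpr a d = -1) by (unfold tpr; apply (core_val _ s); lia).
  assert (Hu2 : u2 a d = 2*s).
  { unfold u2. rewrite Htpr, HN.
    replace (-(s*s)) with ((s*s)*(-1)) by ring. rewrite Z.div_mul by lia.
    rewrite Z.sqrt_square by lia. reflexivity. }
  set (h := Z.gcd x s).
  assert (Hh : 0 < h).
  { pose proof (Z.gcd_nonneg x s). assert (h <> 0); [|lia].
    intro E. apply Z.gcd_eq_0 in E. lia. }
  assert (Hg1 : g1 a d (2*x) = 2*h).
  { unfold g1. rewrite Hu2, Z.gcd_mul_mono_l. reflexivity. }
  assert (Hg2 : g2 a d (2*x) = 1).
  { unfold g2. rewrite Htpr. replace (-1) with (-(1)) by reflexivity.
    rewrite Z.gcd_opp_r, Z.gcd_1_r. reflexivity. }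
  assert (Hg3 : g3 a d (2*x) = 2 \/ g3 a d (2*x) = 4).
  { unfold g3. rewrite Htpr. destruct (Z.even _); simpl; auto. }
  destruct (Z.gcd_divide_r x s) as [k Hk]. fold h in Hk.
  assert (Hko : Z.odd k = true).
  { rewrite Hk, Z.odd_mul in Hso. destruct (Z.odd h), (Z.odd k); simpl in Hso; auto. }
  destruct (sq4 k) as [jk Hkk].
  assert (Hkk' : k*k = 8*jk+1).
  { destruct Hkk as [Hkk|Hkk]; auto. exfalso.
    destruct (Z.Even_or_Odd k) as [[l Hl]|[l Hl]]; subst k.
    - rewrite Z.odd_even in Hko; discriminate.
    - lia. }
  clear Hkk.
  set (G3 := g3 a d (2*x)) in *.
  assert (Hdpr : dpr a d (2*x) = -(k*k*G3)).
  { unfold dpr. fold G3. rewrite Hu2, Htpr, Hg1, Hg2.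
    replace (((2*s)^2 * -1 * G3)) with ((-(k*k*G3)) * ((2*h)^2*1))
      by (rewrite Hk; ring).
    apply Z.div_mul. nia. }
  assert (HgR : (gR a d (2*x) ^ 2 = 4 * IZR h ^ 2 / IZR G3)%R).
  { unfold gR. fold G3. rewrite Hg1, Hg2, Rpow_mult_distr, pow2_sqrt.
    - rewrite mult_IZR. field. destruct Hg3 as [-> | ->]; lra.
    - destruct Hg3 as [-> | ->]; lra. }
  rewrite Rpow_mult_distr, pow2_abs, HgR.
  assert (Hh2 : (0 <= IZR h ^ 2)%R) by (apply pow2_ge_0).
  destruct Hg3 as [E3|E3]; rewrite E3 in *.
  - assert (Hv : (1 <= v2 (dpr a d (2*x)))%nat).
    { apply v2_ge.
      - rewrite Hdpr. exists (-(k*k)). change (2 ^ Z.of_nat 1) with 2. ring.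
      - exists 1%nat. rewrite Hdpr. change (2 ^ Z.of_nat 1) with 2. change (2 ^ Z.of_nat 2) with 4. split.
        + exists (-(k*k)). ring.
        + intros [c Hc]. lia. }
    pose proof (Ncal_sq a d (2*x) 1 Hv) as HN1. rewrite Rp2_1 in HN1.
    replace (4 * IZR h ^ 2 / IZR 2)%R with (2 * IZR h ^ 2)%R by (simpl; field).
    nra.
  - assert (Hv : (2 <= v2 (dpr a d (2*x)))%nat).
    { apply v2_ge.
      - rewrite Hdpr. exists (-(k*k)). change (2 ^ Z.of_nat 2) with 4. ring.
      - exists 2%nat. rewrite Hdpr. change (2 ^ Z.of_nat 2) with 4. change (2 ^ Z.of_nat 3) with 8. split.
        + exists (-(k*k)). ring.
        + intros [c Hc]. lia. }
    pose proof (Ncal_sq a d (2*x) 2 Hv) as HN1. rewrite Rp2_2 in HN1.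
    replace (4 * IZR h ^ 2 / IZR 4)%R with (IZR h ^ 2)%R by (simpl; field).
    nra.
Qed.

Module RealAux.
Local Open Scope R_scope.

Lemma Rp32 (s : Z) : (0 < s)%Z -> Rpower (Rabs (IZR (-(s*s)))) (3/2) = IZR s ^ 3.
Proof.
  intros Hs. assert (HS : 0 < IZR s) by (apply IZR_lt; lia).
  rewrite opp_IZR, mult_IZR, Rabs_Ropp, Rabs_pos_eq by nra.
  rewrite <- Rpower_mult_distr by lra. rewrite <- Rpower_plus.
  replace (3/2 + 3/2) with (INR 3) by (simpl; lra).
  apply Rpower_pow; lra.
Qed.

Lemma bound_use (y S r Q h : R) : 1 <= y -> 0 < r -> 4*h^2 <= Q -> 1 <= h ->
  y < Rmax 1 (76 * S / (r * Q)) -> y * r * h^2 * 4 < 76 * S.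
Proof.
  intros Hy Hr HQ Hh H.
  assert (HQ0 : 0 < Q) by nra.
  unfold Rmax in H. destruct Rle_dec as [_|_]; [|lra].
  apply (Rmult_lt_compat_r (r*Q)) in H; [|nra].
  replace (76 * S / (r * Q) * (r * Q)) with (76 * S) in H by (field; lra).
  assert (y * r * (4*h^2) <= y * r * Q) by (apply Rmult_le_compat_l; nra).
  nra.
Qed.

Lemma case8 (A S W r M H : R) : 0<A -> 0<S -> 0<W -> 0<r -> r*r = A*A+S*S ->
  W*W = 16*(r*r)+1 -> W*W + 16*(r*r) - 8*A*W <= M -> 1 <= H ->
  M*r*H^2*4 < 76*S^3 -> False.
Proof.
  intros HA HS HW Hr Hr2 HW2 HM HH Hb.
  assert (HW4 : 4*r <= W) by nra.
  assert (HrA : A < r) by nra.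
  assert (HM2 : 32*r*(r-A) <= M).
  { assert (HWA : 4*(r-A) <= W - 4*A) by lra.
    assert (16*((r-A)*(r-A)) <= (W-4*A)*(W-4*A)).
    { replace (16*((r-A)*(r-A))) with ((4*(r-A))*(4*(r-A))) by ring.
      apply Rmult_le_compat; lra. }
    nra. }
  assert (HM3 : 32*(r*r)*(r-A) <= M*r).
  { replace (32*(r*r)*(r-A)) with ((32*r*(r-A))*r) by ring.
    apply Rmult_le_compat_r; lra. }
  assert (Hkey : 19*S*(r+A) < 32*(r*r)).
  { assert (Hsq : (19*S*(r+A))^2 < (32*(r*r))^2).
    { assert (E1 : (19*S*(r+A))^2 = 361*((r-A)*(r+A)^3)).
      { replace ((19*S*(r+A))^2) with (361*(S*S)*(r+A)^2) by ring.
        replace (S*S) with (r*r - A*A) by lra. ring. }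
      assert (E2 : 27*r^4 - 16*((r-A)*(r+A)^3) = (2*A-r)^2*(4*A^2+12*A*r+11*r^2)) by ring.
      assert (0 <= (2*A-r)^2*(4*A^2+12*A*r+11*r^2)).
      { apply Rmult_le_pos; [apply pow2_ge_0| nra]. }
      assert (0 < r^4) by (apply pow_lt; lra).
      nra. }
    assert (0 < 19*S*(r+A)) by nra.
    nra. }
  assert (H3 : 19*S^3 <= 32*(r*r)*(r-A)).
  {
    assert (E : (r-A)*(r+A) = S*S) by nra.
    apply (Rmult_le_reg_r (r+A)); [lra|].
    replace (32*(r*r)*(r-A)*(r+A)) with (32*(r*r)*(S*S)) by (rewrite <- E; ring).
    replace (19*S^3*(r+A)) with ((19*S*(r+A))*(S*S)) by ring.
    apply Rmult_le_compat_r; nra. }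
  assert (HH2 : 1 <= H^2) by nra.
  assert (M*r <= M*r*H^2) by (assert (0 <= M*r) by nra; nra).
  nra.
Qed.

Lemma case2 (A S r M H : R) : 0<A -> 0<S -> 0<r -> r*r = A*A+S*S ->
  S*S <= M -> 5 <= H -> M*r*H^2*4 < 76*S^3 -> False.
Proof.
  intros HA HS Hr Hr2 HM HH Hb.
  assert (S < r) by nra.
  assert (25 <= H^2) by nra.
  assert (S*S*r*25 <= M*r*H^2).
  { apply Rmult_le_compat; nra. }
  assert (S*S*S < S*S*r) by (apply Rmult_lt_compat_l; nra).
  nra.
Qed.

End RealAux.
Import RealAux.


Theorem lemma5p5 (a d t u sigma Xs Ys Xm Ym : Z) :
  0 < a -> 0 < d ->
  ~ (exists r : Z, d = r * r) ->
  (exists s : Z, - Nalpha a d = s * s) -> Z.odd (- Nalpha a d) = true ->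
  0 < t -> 1 <= u <= 8 ->
  (t ^ 2 - d * u ^ 2 = 4 \/ t ^ 2 - d * u ^ 2 = -4) ->
  (sigma = 1 \/ sigma = -1) ->
  ((IZR Xs + IZR Ys * sqrt (IZR d)) / 2
     = (IZR a + sqrt (IZR d)) *
       powerRZ ((IZR t + IZR u * sqrt (IZR d)) / 2) (2 * sigma))%R ->
  ((IZR Xm + IZR Ym * sqrt (IZR d)) / 2
     = (IZR a + sqrt (IZR d)) *
       powerRZ ((IZR t + IZR u * sqrt (IZR d)) / 2) (-2))%R ->
  (IZR Ym / 2 > 1)%R ->
  (exists m : Z, (IZR Ys / 2 = IZR (m * m))%R) ->
  (IZR Ys / 2 <
     Rmax 1 (76 * Rpower (Rabs (IZR (Nalpha a d))) (3 / 2)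
             / (sqrt (IZR d) * (Rabs (gR a d Xs) * Ncal a d Xs) ^ 2)))%R ->
  u = 2 /\ t ^ 2 - d * u ^ 2 = -4 /\ Z.gcd (a ^ 2) d = 1.
Proof.
  intros Ha Hd Hns [s0 Hs0] Hodd Ht Hu Hnorm Hsg Heq _ _ [m Hm] Hbound.
  set (S := Z.abs s0).
  assert (HN : Nalpha a d = -(S*S)) by (unfold S; nia).
  assert (HSo : Z.odd S = true).
  { rewrite HN, Z.opp_involutive, Z.odd_mul in Hodd. destruct (Z.odd S); auto. }
  assert (HS : 0 < S).
  { assert (S <> 0) by (intro E; rewrite E in HSo; discriminate). unfold S in *; lia. }
  assert (HdS : d = a*a + S*S) by (unfold Nalpha in HN; rewrite Z.pow_2_r in HN; lia).
  assert (Hns' : forall r, d <> r*r) by (intros r E; apply Hns; exists r; exact E).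
  assert (He : exists e, (e = 1 \/ e = -1) /\ t*t - d*(u*u) = 4*e).
  { rewrite !Z.pow_2_r in Hnorm. destruct Hnorm; [exists 1|exists (-1)]; split; lia. }
  destruct He as [e [He E]].
  destruct (extract a d t u e sigma Xs Ys Hns' Hd E He Hsg Heq) as [HX HY].
  assert (HYm : Ys = 2*(m*m)).
  { apply eq_IZR. rewrite mult_IZR. lra. }
  assert (Y : 4*(m*m) = t*t + d*(u*u) + 2*sigma*a*t*u) by lia.
  destruct (int_cases a S d t u e sigma m Ha HS HSo HdS Ht Hu He Hsg E Y)
    as [w [Hw [[Hu2 He2]|[Hu8 [He8 Hww]]]]].
  -
    subst t u e.
    split; [reflexivity|]. split; [lia|].
    set (x := a*(w*w+d) + 2*sigma*d*w).
    assert (HXs : Xs = 2*x) by (unfold x; nia).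
    assert (Hh : 0 < Z.gcd x S).
    { pose proof (Z.gcd_nonneg x S). assert (Z.gcd x S <> 0); [|lia].
      intro E0. apply Z.gcd_eq_0 in E0. lia. }
    pose proof (denom_bound a d S x HS HSo HN) as Hden.
    rewrite HXs, HN, (Rp32 S HS) in Hbound.
    rewrite Hm in Hbound.
    assert (Hr2 : (sqrt (IZR d) * sqrt (IZR d) = IZR a * IZR a + IZR S * IZR S)%R).
    { rewrite sqrt_sqrt by (apply IZR_le; lia). rewrite <- !mult_IZR, <- plus_IZR. f_equal; lia. }
    assert (Hr0 : (0 < sqrt (IZR d))%R) by (apply sqrt_lt_R0; apply IZR_lt; lia).
    assert (Hh1 : (1 <= IZR (Z.gcd x S))%R) by (apply IZR_le; lia).
    assert (HmS : S*S <= m*m) by (destruct Hsg; subst sigma; nia).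
    assert (Hm1 : 1 <= m*m) by nia.
    assert (Hb := bound_use _ _ _ _ _ ltac:(apply IZR_le; exact Hm1) Hr0 Hden Hh1 Hbound).
    set (g := Z.gcd a S).
    assert (Hg0 : 0 <= g) by apply Z.gcd_nonneg.
    destruct (Z.eq_dec g 1) as [Hg1|Hg1].
    + rewrite Z.pow_2_r, HdS, (Z.add_comm (a*a)), Z.gcd_add_diag_r.
      apply Zgcd_1_rel_prime. apply Zgcd_1_rel_prime in Hg1.
      apply rel_prime_mult; apply rel_prime_sym; apply rel_prime_mult; apply rel_prime_sym; auto.
    + exfalso.
      assert (Hgne : g <> 0) by (intro E0; apply Z.gcd_eq_0 in E0; lia).
      destruct (Z.gcd_divide_l a S) as [a1 Ha1]. fold g in Ha1.
      destruct (Z.gcd_divide_r a S) as [S1 HS1]. fold g in HS1.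
      assert (Hgo : Z.odd g = true).
      { assert (HSo' := HSo). rewrite HS1, Z.odd_mul in HSo'.
        destruct (Z.odd S1), (Z.odd g); simpl in HSo'; auto. }
      assert (Hg3 : ~ (3 | g)).
      { intros [c Hc].
        assert (Hd9 : d = 9*((a1*c)*(a1*c) + (S1*c)*(S1*c))).
        { rewrite HdS, Ha1, HS1, Hc. ring. }
        destruct (sq3 w) as [jw Hw3]. lia. }
      assert (Hg5 : 5 <= g).
      { assert (g = 2 \/ g = 3 \/ g = 4 \/ 5 <= g) as [E0|[E0|[E0|E0]]] by lia; auto;
        rewrite E0 in *; try discriminate. exfalso; apply Hg3; apply Z.divide_refl. }
      assert (Hgd : (g | d)).
      { rewrite HdS. apply Z.divide_add_r; apply Z.divide_mul_l;
        [apply Z.gcd_divide_l | apply Z.gcd_divide_r]. }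
      assert (Hgx : (g | x)).
      { unfold x. apply Z.divide_add_r.
        - apply Z.divide_mul_l. apply Z.gcd_divide_l.
        - apply Z.divide_mul_l. apply Z.divide_mul_r. exact Hgd. }
      assert (Hgh : g <= Z.gcd x S).
      { apply Z.divide_pos_le; [exact Hh|]. apply Z.gcd_greatest; [exact Hgx | apply Z.gcd_divide_r]. }
      apply (case2 (IZR a) (IZR S) (sqrt (IZR d)) (IZR (m*m)) (IZR (Z.gcd x S))).
      * apply IZR_lt; lia.
      * apply IZR_lt; lia.
      * exact Hr0.
      * exact Hr2.
      * rewrite <- mult_IZR. apply IZR_le. exact HmS.
      * apply IZR_le. lia.
      * exact Hb.
  - exfalso. subst t u e.
    set (x := a*(w*w+16*d) + 8*sigma*d*w).
    assert (HXs : Xs = 2*x) by (unfold x; nia).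
    assert (Hh : 0 < Z.gcd x S).
    { pose proof (Z.gcd_nonneg x S). assert (Z.gcd x S <> 0); [|lia].
      intro E0. apply Z.gcd_eq_0 in E0. lia. }
    pose proof (denom_bound a d S x HS HSo HN) as Hden.
    rewrite HXs, HN, (Rp32 S HS) in Hbound.
    rewrite Hm in Hbound.
    assert (Hr2 : (sqrt (IZR d) * sqrt (IZR d) = IZR a * IZR a + IZR S * IZR S)%R).
    { rewrite sqrt_sqrt by (apply IZR_le; lia). rewrite <- !mult_IZR, <- plus_IZR. f_equal; lia. }
    assert (Hr0 : (0 < sqrt (IZR d))%R) by (apply sqrt_lt_R0; apply IZR_lt; lia).
    assert (Hh1 : (1 <= IZR (Z.gcd x S))%R) by (apply IZR_le; lia).
    assert (Hw0 : 0 < w) by lia.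
    assert (HmW : w*w + 16*d - 8*a*w <= m*m) by (destruct Hsg; subst sigma; nia).
    assert (Hm1 : 1 <= m*m) by nia.
    assert (Hb := bound_use _ _ _ _ _ ltac:(apply IZR_le; exact Hm1) Hr0 Hden Hh1 Hbound).
    apply (case8 (IZR a) (IZR S) (IZR w) (sqrt (IZR d)) (IZR (m*m)) (IZR (Z.gcd x S))).
    + apply IZR_lt; lia.
    + apply IZR_lt; lia.
    + apply IZR_lt; lia.
    + exact Hr0.
    + exact Hr2.
    + rewrite Hr2. assert (Hi : w*w = 16*(a*a+S*S)+1) by lia.
      apply (f_equal IZR) in Hi. repeat rewrite ?plus_IZR, ?mult_IZR in Hi. exact Hi.
    + assert (HmW' : w*w + 16*(a*a+S*S) - 8*a*w <= m*m) by lia.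
      apply IZR_le in HmW'. rewrite Hr2.
      repeat rewrite ?minus_IZR, ?plus_IZR, ?mult_IZR in HmW'. rewrite mult_IZR. exact HmW'.
    + exact Hh1.
    + exact Hb.
Qed.
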